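(* Fix $n\ge 1$. For every $x\in \mathcal{NM}_n$, the idempotent Euler characteristic satisfies $\chi^+(x\odot x)=\chi^+(x)$.
   Context: An NM algebra is an algebra $\langle A,\wedge,\vee,\odot,\to,\bot,\top\rangle$ such that $(A,\wedge,\vee,\bot,\top)$ is a bounded lattice, $\langle A,\odot,\top\rangle$ is a commutative monoid, and for all $x,y,z$: $x\odot y\le z$ iff $x\le y\to z$; $(x\to y)\vee(y\to x)=\top$; $\neg(x\odot y)\vee((x\wedge y)\to(x\odot y))=\top$ where $\neg x:=x\to\bot$; and $\neg\neg x=x$. $\mathcal{NM}_n$ denotes the free NM algebra on $n$ generators, i.e. the Lindenbaum algebra of formulas of Nilpotent Minimum logic in the variables $x_1,\dots,x_n$ modulo logical equivalence; equivalently, the subalgebra of $[0,1]^{[0,1]^n}$ generated by the coordinate projections, where $[0,1]$ carries the standard NM operations ($\wedge=\min$, $\vee=\max$, $x\odot y=\min(x,y)$ if $x+y>1$ and $0$ otherwise, $x\to y=1$ if $x\le y$ and $\max(1-x,y)$ otherwise). It is a finite distributive lattice. A valuation on a distributive lattice $L$ is a map $\nu:L\to\mathbb{R}$ with $\nu(x)+\nu(y)=\nu(x\vee y)+\nu(x\wedge y)$ for all $x,y$; on a finite distributive lattice a valuation is uniquely determined by its values on join-irreducible elements and on the bottom $\bot$. An element is join-irreducible if it is not $\bot$ and $x=y\vee z$ implies $x=y$ or $x=z$. The idempotent Euler characteristic $\chi^+:\mathcal{NM}_n\to\mathbb{R}$ is the unique valuation with $\chi^+(\bot)=0$ and, for each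 join-irreducible $g$, $\chi^+(g)=1$ if $g\odot g=g$ and $\chi^+(g)=0$ otherwise. *)

(* Defs.v *)
From Stdlib Require Import Reals Lra.
From Stdlib Require Vectors.Fin.
Open Scope R_scope.

Definition nm_mul (x y : R) : R := if Rlt_dec 1 (x + y) then Rmin x y else 0.
Definition nm_imp (x y : R) : R := if Rle_dec x y then 1 else Rmax (1 - x) y.

Inductive form (n : nat) : Type :=
| Var : Fin.t n -> form n
| Bot : form n
| Top : form n
| And : form n -> form n -> form n
| Or  : form n -> form n -> form n
| Mul : form n -> form n -> form n
| Imp : form n -> form n -> form n.
Arguments Var {n} _.
Arguments Bot {n}.
Arguments Top {n}.
Arguments And {n} _ _.
Arguments Or {n} _ _.
Arguments Mul {n} _ _.
Arguments Imp {n} _ _.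

Fixpoint eval {n : nat} (v : Fin.t n -> R) (f : form n) : R :=
  match f with
  | Var i => v i
  | Bot => 0
  | Top => 1
  | And a b => Rmin (eval v a) (eval v b)
  | Or a b => Rmax (eval v a) (eval v b)
  | Mul a b => nm_mul (eval v a) (eval v b)
  | Imp a b => nm_imp (eval v a) (eval v b)
  end.

Definition unit_cube {n : nat} (v : Fin.t n -> R) : Prop :=
  forall i, 0 <= v i <= 1.

(** Logical equivalence = equality as functions on [0,1]^n.
    NM_n is the quotient of [form n] by [equiv]. *)
Definition equiv {n : nat} (f g : form n) : Prop :=
  forall v, unit_cube v -> eval v f = eval v g.

Definition join_irreducible {n : nat} (g : form n) : Prop :=
  ~ equiv g Bot /\
  forall a b : form n, equiv g (Or a b) -> equiv g a \/ equiv g b.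

Definition idempotent {n : nat} (g : form n) : Prop := equiv (Mul g g) g.

Definition valuation {n : nat} (nu : form n -> R) : Prop :=
  (forall f g, equiv f g -> nu f = nu g) /\
  (forall f g, nu f + nu g = nu (Or f g) + nu (And f g)).

Definition is_chi_plus {n : nat} (nu : form n -> R) : Prop :=
  valuation nu /\ nu Bot = 0 /\
  (forall g, join_irreducible g -> idempotent g -> nu g = 1) /\
  (forall g, join_irreducible g -> ~ idempotent g -> nu g = 0).

(* Main.v *)
Require Import Defs.
From Stdlib Require Import Reals.
From Stdlib Require Import Lra Lia List Permutation ClassicalEpsilon Classical.
From Stdlib Require Vectors.Fin.
Import ListNotations.
Open Scope R_scope.
Fixpoint enum_fin (n:nat) : list (Fin.t n) :=
  match n with 0%nat => [] | S m => Fin.F1 :: map Fin.FS (enum_fin m) end.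

Lemma enum_fin_in n (i : Fin.t n) : In i (enum_fin n).
Proof. induction i; simpl; [left; reflexivity | right; apply in_map; auto]. Qed.

Lemma enum_fin_len n : length (enum_fin n) = n.
Proof. induction n; simpl; auto. rewrite length_map; auto. Qed.

Fixpoint enum_fun (n:nat) (A : list R) : list (Fin.t n -> R) :=
  match n with
  | 0%nat => [fun i => Fin.case0 (fun _ => R) i]
  | S m => flat_map (fun a => map (fun g => fun i => Fin.caseS' i (fun _ => R) a g) (enum_fun m A)) A
  end.

Lemma enum_fun_complete n A (f : Fin.t n -> R) :
  (forall i, In (f i) A) -> exists g, In g (enum_fun n A) /\ forall i, g i = f i.
Proof.
  revert f; induction n; intros f Hf.
  - exists (fun i => Fin.case0 (fun _ => R) i). split; [left; reflexivity|].
    intro i; apply (Fin.case0 (fun i => _ = f i) i).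
  - destruct (IHn (fun i => f (Fin.FS i))) as [g [Hg Hgi]]; [intro; apply Hf|].
    exists (fun i => Fin.caseS' i (fun _ => R) (f Fin.F1) g). split.
    + simpl. apply in_flat_map. exists (f Fin.F1). split; [apply Hf|]. apply (in_map (fun g0 => fun i => Fin.caseS' i (fun _ => R) (f Fin.F1) g0)); auto.
    + intro i. refine (Fin.caseS' i (fun i => _ = f i) _ _); simpl; auto.
Qed.

Definition Lv {n} (v : Fin.t n -> R) : list R :=
  0 :: 1 :: flat_map (fun i => [v i; 1 - v i]) (enum_fin n).

Lemma Lv_len {n} (v : Fin.t n -> R) : length (Lv v) = (2 + 2*n)%nat.
Proof.
  unfold Lv. simpl. pose proof (enum_fin_len n) as E.
  assert (forall l : list (Fin.t n), length (flat_map (fun i => [v i; 1 - v i]) l) = (2 * length l)%nat).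
  { induction l; simpl; auto. rewrite IHl. lia. }
  rewrite H, E. lia.
Qed.

Lemma compl_in {n} (v : Fin.t n -> R) x : In x (Lv v) -> In (1 - x) (Lv v).
Proof.
  unfold Lv; simpl. intros [H|[H|H]].
  - subst. right; left; ring.
  - subst. left; ring.
  - right; right. apply in_flat_map in H. destruct H as [i [Hi Hx]].
    apply in_flat_map. exists i; split; auto. simpl in *.
    destruct Hx as [H|[H|[]]]; subst; [right; left; auto | left; ring].
Qed.

Lemma eval_in {n} (v : Fin.t n -> R) f : In (eval v f) (Lv v).
Proof.
  induction f; simpl.
  - right; right. apply in_flat_map. exists t. split; [apply enum_fin_in| left; auto].
  - left; auto.
  - right; left; auto.
  - unfold Rmin; destruct Rle_dec; auto.
  - unfold Rmax; destruct Rle_dec; auto.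
  - unfold nm_mul; destruct Rlt_dec; [unfold Rmin; destruct Rle_dec; auto| left; auto].
  - unfold nm_imp; destruct Rle_dec; [right; left; auto|].
    unfold Rmax; destruct Rle_dec; auto. apply compl_in; auto.
Qed.

Lemma Lv_cube {n} (v : Fin.t n -> R) x : unit_cube v -> In x (Lv v) -> 0 <= x <= 1.
Proof.
  intros Hv. unfold Lv; simpl. intros [H|[H|H]]; try (subst; lra).
  apply in_flat_map in H. destruct H as [i [_ Hx]]. specialize (Hv i).
  simpl in Hx; destruct Hx as [H|[H|[]]]; subst; lra.
Qed.

Lemma eval_cube {n} (v : Fin.t n -> R) f : unit_cube v -> 0 <= eval v f <= 1.
Proof. intros; eapply Lv_cube; eauto using eval_in. Qed.

Lemma eval_ext {n} (v w : Fin.t n -> R) f : (forall i, v i = w i) -> eval v f = eval w f.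
Proof. intros H; induction f; simpl; try rewrite IHf1, IHf2; auto. Qed.

Lemma equivar {n} (v : Fin.t n -> R) (psi : R -> R)
  (Hm : forall x y, In x (Lv v) -> In y (Lv v) -> x < y -> psi x < psi y)
  (Hc : forall x, psi (1 - x) = 1 - psi x) (H0 : psi 0 = 0) (H1 : psi 1 = 1) f :
  eval (fun i => psi (v i)) f = psi (eval v f).
Proof.
  assert (Hle : forall x y, In x (Lv v) -> In y (Lv v) -> (x <= y <-> psi x <= psi y)).
  { intros x y Hx Hy; split; intro H.
    - destruct (Rle_lt_or_eq_dec _ _ H) as [H'|H']; [left; auto| subst; lra].
    - destruct (Rle_dec x y); auto. assert (psi y < psi x) by (apply Hm; auto; lra). lra. }
  assert (Hlt : forall x y, In x (Lv v) -> In y (Lv v) -> (x < y <-> psi x < psi y)).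
  { intros x y Hx Hy; split; intro H; auto.
    destruct (Rlt_dec x y) as [r|r]; auto. assert (Hq : y <= x) by lra.
    apply (Hle y x Hy Hx) in Hq. lra. }
  induction f; simpl; auto.
  - rewrite IHf1, IHf2. pose proof (eval_in v f1); pose proof (eval_in v f2).
    unfold Rmin. destruct (Rle_dec (eval v f1) (eval v f2)) as [a|a];
    destruct (Rle_dec (psi (eval v f1)) (psi (eval v f2))) as [b|b]; auto.
    + exfalso; apply b; first [refine (proj1 (Hle _ _ _ _) _) | refine (proj2 (Hle _ _ _ _) _)]; eauto.
    + exfalso; apply a; first [refine (proj1 (Hle _ _ _ _) _) | refine (proj2 (Hle _ _ _ _) _)]; eauto.
  - rewrite IHf1, IHf2. pose proof (eval_in v f1); pose proof (eval_in v f2).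
    unfold Rmax. destruct (Rle_dec (eval v f1) (eval v f2)) as [a|a];
    destruct (Rle_dec (psi (eval v f1)) (psi (eval v f2))) as [b|b]; auto.
    + exfalso; apply b; first [refine (proj1 (Hle _ _ _ _) _) | refine (proj2 (Hle _ _ _ _) _)]; eauto.
    + exfalso; apply a; first [refine (proj1 (Hle _ _ _ _) _) | refine (proj2 (Hle _ _ _ _) _)]; eauto.
  - rewrite IHf1, IHf2. pose proof (eval_in v f1) as E1; pose proof (eval_in v f2) as E2.
    set (x := eval v f1) in *; set (y := eval v f2) in *.
    assert (Hk : 1 < x + y <-> 1 < psi x + psi y).
    { pose proof (Hlt (1 - y) x (compl_in v y E2) E1) as HH. rewrite Hc in HH.
      split; intro Hx.
      - assert (Hq : 1 - y < x) by lra. apply HH in Hq. lra.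
      - assert (Hq : 1 - psi y < psi x) by lra. apply HH in Hq. lra. }
    unfold nm_mul. destruct (Rlt_dec 1 (x+y)) as [a|a];
    destruct (Rlt_dec 1 (psi x + psi y)) as [b|b]; auto.
    + unfold Rmin. destruct (Rle_dec x y) as [c|c];
      destruct (Rle_dec (psi x) (psi y)) as [d|d]; auto.
      * exfalso; apply d; first [refine (proj1 (Hle _ _ _ _) _) | refine (proj2 (Hle _ _ _ _) _)]; eauto.
      * exfalso; apply c; first [refine (proj1 (Hle _ _ _ _) _) | refine (proj2 (Hle _ _ _ _) _)]; eauto.
    + exfalso; apply b; apply Hk; auto.
    + exfalso; apply a; apply Hk; auto.
  - rewrite IHf1, IHf2. pose proof (eval_in v f1) as E1; pose proof (eval_in v f2) as E2.
    set (x := eval v f1) in *; set (y := eval v f2) in *.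
    unfold nm_imp. destruct (Rle_dec x y) as [a|a];
    destruct (Rle_dec (psi x) (psi y)) as [b|b]; auto.
    + exfalso; apply b; first [refine (proj1 (Hle _ _ _ _) _) | refine (proj2 (Hle _ _ _ _) _)]; eauto.
    + exfalso; apply a; first [refine (proj1 (Hle _ _ _ _) _) | refine (proj2 (Hle _ _ _ _) _)]; eauto.
    + rewrite <- Hc. pose proof (compl_in v x E1) as E3.
      unfold Rmax. destruct (Rle_dec (1 - x) y) as [c|c];
      destruct (Rle_dec (psi (1 - x)) (psi y)) as [d|d]; auto.
      * exfalso; apply d; first [refine (proj1 (Hle _ _ _ _) _) | refine (proj2 (Hle _ _ _ _) _)]; eauto.
      * exfalso; apply c; first [refine (proj1 (Hle _ _ _ _) _) | refine (proj2 (Hle _ _ _ _) _)]; eauto.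
Qed.
Fixpoint cnt (L : list R) (x : R) : nat :=
  match L with
  | [] => 0%nat
  | t :: L' => ((if Rlt_dec t x then 1 else 0) + (if Rle_dec t x then 1 else 0) + cnt L' x)%nat
  end.

Lemma cnt_mono L x y : x <= y -> (cnt L x <= cnt L y)%nat.
Proof.
  intro H; induction L; simpl; auto.
  destruct (Rlt_dec a x); destruct (Rle_dec a x); destruct (Rlt_dec a y); destruct (Rle_dec a y);
  try (exfalso; lra); lia.
Qed.

Lemma cnt_strict L x y : x < y -> In y L -> (cnt L x < cnt L y)%nat.
Proof.
  intros H Hy; induction L; simpl in *; [tauto|].
  destruct Hy as [Hy|Hy].
  - subst. pose proof (cnt_mono L x y (Rlt_le _ _ H)).
    destruct (Rlt_dec y x); destruct (Rle_dec y x); destruct (Rlt_dec y y); destruct (Rle_dec y y);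
    try (exfalso; lra); lia.
  - specialize (IHL Hy).
    destruct (Rlt_dec a x); destruct (Rle_dec a x); destruct (Rlt_dec a y); destruct (Rle_dec a y);
    try (exfalso; lra); lia.
Qed.

Lemma cnt_le L x : (cnt L x <= 2 * length L)%nat.
Proof. induction L; simpl; auto. destruct Rlt_dec; destruct Rle_dec; lia. Qed.

Lemma cnt_perm L L' x : Permutation L L' -> cnt L x = cnt L' x.
Proof. induction 1; simpl; lia. Qed.
Open Scope nat_scope.

Lemma cnt_compl (L : list R) (x : R) : cnt (map (fun t : R => (1 - t)%R) L) (1 - x)%R + cnt L x = 2 * length L.
Proof.
  induction L; simpl; auto.
  destruct (Rlt_dec (1 - a) (1 - x)); destruct (Rle_dec (1-a) (1-x));
  destruct (Rlt_dec a x); destruct (Rle_dec a x); try (exfalso; lra); lia.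
Qed.

Close Scope nat_scope.
Lemma Lv_sym {n} (v : Fin.t n -> R) : Permutation (map (fun t => 1 - t) (Lv v)) (Lv v).
Proof.
  unfold Lv. simpl. replace (1 - 0) with 1 by ring. replace (1 - 1) with 0 by ring.
  eapply perm_trans; [apply perm_swap|]. apply perm_skip, perm_skip.
  induction (enum_fin n); simpl; auto.
  replace (1 - (1 - v a)) with (v a) by ring.
  eapply perm_trans; [apply perm_swap|]. apply perm_skip, perm_skip. auto.
Qed.

Lemma cnt_Lv_compl {n} (v : Fin.t n -> R) x :
  (cnt (Lv v) (1 - x) + cnt (Lv v) x = 2 * length (Lv v))%nat.
Proof. rewrite <- (cnt_perm _ _ _ (Lv_sym v)). apply cnt_compl. Qed.

Definition psi {n} (v : Fin.t n -> R) (x : R) : R :=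
  (INR (cnt (Lv v) x) - INR (cnt (Lv v) 0)) / (INR (cnt (Lv v) 1) - INR (cnt (Lv v) 0)).

Lemma Lv_0 {n} (v : Fin.t n -> R) : In 0 (Lv v). Proof. left; auto. Qed.
Lemma Lv_1 {n} (v : Fin.t n -> R) : In 1 (Lv v). Proof. right; left; auto. Qed.

Lemma psi_den {n} (v : Fin.t n -> R) : INR (cnt (Lv v) 1) - INR (cnt (Lv v) 0) > 0.
Proof.
  pose proof (cnt_strict (Lv v) 0 1 Rlt_0_1 (Lv_1 v)). apply lt_INR in H. lra.
Qed.

Lemma psi_props {n} (v : Fin.t n -> R) :
  (forall x y, In x (Lv v) -> In y (Lv v) -> x < y -> psi v x < psi v y) /\
  (forall x, psi v (1 - x) = 1 - psi v x) /\ psi v 0 = 0 /\ psi v 1 = 1.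
Proof.
  pose proof (psi_den v) as D. unfold psi. split; [|split; [|split]].
  - intros x y _ Hy Hxy. pose proof (cnt_strict _ _ _ Hxy Hy). apply lt_INR in H.
    apply Rmult_lt_compat_r; [apply Rinv_0_lt_compat; lra| lra].
  - intro x. pose proof (cnt_Lv_compl v x) as A. pose proof (cnt_Lv_compl v 0) as B.
    replace (1 - 0) with 1 in B by ring.
    apply (f_equal INR) in A; apply (f_equal INR) in B. rewrite plus_INR in A, B.
    assert (INR (cnt (Lv v) (1 - x)) = INR (cnt (Lv v) 1) + INR (cnt (Lv v) 0) - INR (cnt (Lv v) x)) as E by lra.
    rewrite E. field. lra.
  - field. lra.
  - field. lra.
Qed.

Definition KK (n : nat) : nat := (4 * n + 4)%nat.
Definition Acoord (n : nat) : list R :=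
  flat_map (fun a => flat_map (fun b => map (fun c => (INR a - INR b) / (INR c - INR b))
     (seq 0 (S (KK n)))) (seq 0 (S (KK n)))) (seq 0 (S (KK n))).
Definition Spts (n : nat) : list (Fin.t n -> R) := enum_fun n (Acoord n).

Lemma cnt_KK {n} (v : Fin.t n -> R) x : In (cnt (Lv v) x) (seq 0 (S (KK n))).
Proof.
  apply in_seq. pose proof (cnt_le (Lv v) x). rewrite Lv_len in H. unfold KK. lia.
Qed.

Lemma psi_in_A {n} (v : Fin.t n -> R) x : In (psi v x) (Acoord n).
Proof.
  unfold Acoord, psi. apply in_flat_map. exists (cnt (Lv v) x). split; [apply cnt_KK|].
  apply in_flat_map. exists (cnt (Lv v) 0). split; [apply cnt_KK|].
  apply (in_map (fun c => (INR (cnt (Lv v) x) - INR (cnt (Lv v) 0)) / (INR c - INR (cnt (Lv v) 0)))).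
  apply cnt_KK.
Qed.

Lemma Det {n} (f g : form n) :
  (forall p, In p (Spts n) -> eval p f = eval p g) -> equiv f g.
Proof.
  intros H v Hv.
  destruct (enum_fun_complete n (Acoord n) (fun i => psi v (v i))) as [p [Hp Hpi]].
  { intro; apply psi_in_A. }
  specialize (H p Hp). rewrite (eval_ext p (fun i => psi v (v i))) in H by auto.
  rewrite (eval_ext p (fun i => psi v (v i))) in H by auto.
  destruct (psi_props v) as [Hm [Hc [H0 H1]]].
  rewrite !(equivar v (psi v) Hm Hc H0 H1) in H.
  pose proof (eval_in v f); pose proof (eval_in v g).
  destruct (Rtotal_order (eval v f) (eval v g)) as [Hl|[Hl|Hl]]; auto.
  - apply Hm in Hl; auto; lra.
  - apply Hm in Hl; auto; lra.
Qed.
Lemma equiv_refl {n} (f : form n) : equiv f f. Proof. intros v _; auto. Qed.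
Lemma equiv_sym {n} (f g : form n) : equiv f g -> equiv g f.
Proof. intros H v Hv; symmetry; auto. Qed.
Lemma equiv_trans {n} (f g h : form n) : equiv f g -> equiv g h -> equiv f h.
Proof. intros H1 H2 v Hv; rewrite H1, H2; auto. Qed.

Definition fle {n} (f g : form n) := forall v, unit_cube v -> eval v f <= eval v g.
Definition sb {n} (f g : form n) := fle f g /\ ~ equiv f g.

Lemma fle_antisym {n} (f g : form n) : fle f g -> fle g f -> equiv f g.
Proof. intros H1 H2 v Hv. apply Rle_antisym; auto. Qed.
Lemma fle_trans {n} (f g h : form n) : fle f g -> fle g h -> fle f h.
Proof. intros H1 H2 v Hv. eapply Rle_trans; eauto. Qed.
Lemma fle_equiv {n} (f g : form n) : equiv f g -> fle f g.
Proof. intros H v Hv; rewrite H; auto; lra. Qed.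

Lemma sb_trans {n} (f g h : form n) : sb f g -> sb g h -> sb f h.
Proof.
  intros [H1 N1] [H2 N2]. split; [eapply fle_trans; eauto|].
  intro E. apply N1. apply fle_antisym; auto.
  eapply fle_trans; [|apply fle_equiv, equiv_sym, E]. auto.
Qed.
Lemma sb_irr {n} (f : form n) : ~ sb f f.
Proof. intros [_ N]; apply N, equiv_refl. Qed.

Definition indc (P : Prop) : R := if excluded_middle_informative P then 1 else 0.
Definition bdec (P : Prop) : bool := if excluded_middle_informative P then true else false.
Lemma bdec_true P : bdec P = true <-> P.
Proof. unfold bdec; destruct excluded_middle_informative; split; intros; auto; discriminate. Qed.
Lemma bdec_false P : bdec P = false <-> ~ P.
Proof. unfold bdec; destruct excluded_middle_informative; split; intros; auto; try discriminate; tauto. Qed.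
Lemma ind_iff (P Q : Prop) : (P <-> Q) -> indc P = indc Q.
Proof. unfold indc; intros; do 2 destruct excluded_middle_informative; tauto. Qed.

Definition rsum (l : list R) : R := fold_right Rplus 0 l.
Lemma rsum_ext {A} (l : list A) f g : (forall x, In x l -> f x = g x) -> rsum (map f l) = rsum (map g l).
Proof. intros H; f_equal; apply map_ext_in; auto. Qed.
Lemma rsum_plus {A} (l : list A) f g : rsum (map f l) + rsum (map g l) = rsum (map (fun x => f x + g x) l).
Proof. induction l; simpl; [ring| rewrite <- IHl; ring]. Qed.
Lemma rsum_zero {A} (l : list A) f : (forall x, In x l -> f x = 0) -> rsum (map f l) = 0.
Proof. induction l; simpl; intros; auto. rewrite H, IHl; auto. ring. Qed.

Lemma filter_len_le {A} (l : list A) p q : (forall x, In x l -> p x = true -> q x = true) ->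
  (length (filter p l) <= length (filter q l))%nat.
Proof.
  induction l; simpl; intros; auto.
  destruct (p a) eqn:E1; destruct (q a) eqn:E2; simpl;
  try (specialize (H a (or_introl eq_refl) E1); congruence);
  pose proof (IHl (fun x Hx => H x (or_intror Hx))); lia.
Qed.
Lemma filter_len_lt {A} (l : list A) p q : (forall x, In x l -> p x = true -> q x = true) ->
  (exists x, In x l /\ q x = true /\ p x = false) ->
  (length (filter p l) < length (filter q l))%nat.
Proof.
  induction l; simpl; intros H [x [Hx [Hq Hp]]]; [tauto|].
  pose proof (filter_len_le l p q (fun x Hx => H x (or_intror Hx))).
  destruct Hx as [Hx|Hx].
  - subst. rewrite Hq, Hp. simpl; lia.
  - assert (IH : (length (filter p l) < length (filter q l))%nat)
      by (apply IHl; eauto).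
    destruct (p a) eqn:E1; destruct (q a) eqn:E2; simpl;
    try (specialize (H a (or_introl eq_refl) E1); congruence); lia.
Qed.

Definition Tup {n} (f : form n) : list R := map (fun p => eval p f) (Spts n).

Fixpoint prod_enum (As : list (list R)) : list (list R) :=
  match As with
  | [] => [[]]
  | A :: As' => flat_map (fun a => map (cons a) (prod_enum As')) A
  end.

Lemma prod_complete t As : Forall2 (fun x A => In x A) t As -> In t (prod_enum As).
Proof.
  induction 1; simpl; auto. apply in_flat_map. exists x; split; auto. apply in_map; auto.
Qed.

Definition reps (n : nat) : list (form n) :=
  map (fun t => epsilon (inhabits (@Bot n)) (fun f => Tup f = t)) (prod_enum (map Lv (Spts n))).

Lemma map_eq_in {A B} (g h : A -> B) l x : map g l = map h l -> In x l -> g x = h x.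
Proof.
  induction l; simpl; intros E Hx; [tauto|]. injection E; intros. destruct Hx; subst; auto.
Qed.

Lemma reps_cover {n} (f : form n) : exists r, In r (reps n) /\ equiv f r.
Proof.
  set (r := epsilon (inhabits (@Bot n)) (fun g => Tup g = Tup f)).
  assert (Hr : Tup r = Tup f) by (apply epsilon_spec; exists f; auto).
  exists r; split.
  - apply (in_map (fun t => epsilon (inhabits (@Bot n)) (fun g => Tup g = t))).
    apply prod_complete. unfold Tup. induction (Spts n); simpl; constructor; auto. apply eval_in.
  - apply Det. intros p Hp. symmetry. exact (map_eq_in _ _ _ _ Hr Hp).
Qed.

Fixpoint dedupE {n} (l : list (form n)) : list (form n) :=
  match l with
  | [] => []
  | a :: l' => if excluded_middle_informative (exists b, In b l' /\ equiv a b)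
               then dedupE l' else a :: dedupE l'
  end.

Lemma dedup_sub {n} (l : list (form n)) x : In x (dedupE l) -> In x l.
Proof.
  induction l; simpl; auto. destruct excluded_middle_informative; simpl; intros; auto.
  destruct H; auto.
Qed.

Lemma dedup_cover {n} (l : list (form n)) x : In x l -> exists y, In y (dedupE l) /\ equiv x y.
Proof.
  revert x; induction l; simpl; [tauto|]. intros x Hx.
  destruct excluded_middle_informative as [[b [Hb Eb]]|N].
  - destruct Hx as [Hx|Hx]; auto. subst. destruct (IHl b Hb) as [y [Hy Ey]].
    exists y; split; auto. eapply equiv_trans; eauto.
  - destruct Hx as [Hx|Hx].
    + subst; exists x; split; [left; auto| apply equiv_refl].
    + destruct (IHl x Hx) as [y [Hy Ey]]; exists y; split; [right|]; auto.
Qed.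

Definition PW {n} (l : list (form n)) := ForallOrdPairs (fun a b => ~ equiv a b) l.

Lemma dedup_pw {n} (l : list (form n)) : PW (dedupE l).
Proof.
  induction l; simpl; [constructor|]. destruct excluded_middle_informative as [_|N]; auto.
  constructor; auto. apply Forall_forall. intros y Hy E. apply N. exists y; split; auto.
  eapply dedup_sub; eauto.
Qed.

Lemma pw_filter {n} (l : list (form n)) p : PW l -> PW (filter p l).
Proof.
  induction 1; simpl; [constructor|]. destruct (p a); auto. constructor; auto.
  apply Forall_forall. intros y Hy. apply filter_In in Hy. rewrite Forall_forall in H. apply H; tauto.
Qed.

Definition Jl (n : nat) : list (form n) :=
  filter (fun r => bdec (join_irreducible r)) (dedupE (reps n)).

Lemma Jl_ji {n} j : In j (Jl n) -> join_irreducible j.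
Proof. unfold Jl; intros H; apply filter_In in H. apply bdec_true; tauto. Qed.

Lemma Jl_pw n : PW (Jl n). Proof. apply pw_filter, dedup_pw. Qed.

Lemma ji_equiv {n} (f g : form n) : equiv f g -> join_irreducible f -> join_irreducible g.
Proof.
  intros E [N H]. split.
  - intro E2; apply N; eapply equiv_trans; eauto.
  - intros a b E2. destruct (H a b) as [H1|H1].
    + eapply equiv_trans; eauto.
    + left. eapply equiv_trans; [apply equiv_sym, E| exact H1].
    + right. eapply equiv_trans; [apply equiv_sym, E| exact H1].
Qed.

Lemma idem_equiv {n} (f g : form n) : equiv f g -> idempotent f -> idempotent g.
Proof.
  intros E H v Hv. simpl. rewrite <- !E by auto. apply H; auto.
Qed.

Lemma Jl_cover {n} (g : form n) : join_irreducible g -> exists j, In j (Jl n) /\ equiv g j.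
Proof.
  intros Hg. destruct (reps_cover g) as [r [Hr Er]].
  destruct (dedup_cover _ _ Hr) as [y [Hy Ey]].
  exists y. assert (E : equiv g y) by (eapply equiv_trans; eauto). split; auto.
  unfold Jl. apply filter_In; split; auto. apply bdec_true. eapply ji_equiv; eauto.
Qed.
Ltac dec := repeat match goal with
  | |- context [Rle_dec ?a ?b] => destruct (Rle_dec a b)
  | |- context [Rlt_dec ?a ?b] => destruct (Rlt_dec a b)
  | H : context [Rle_dec ?a ?b] |- _ => destruct (Rle_dec a b)
  | H : context [Rlt_dec ?a ?b] |- _ => destruct (Rlt_dec a b) end.

Fixpoint dd {n} (m : nat) (j : form n) : R :=
  match m with
  | 0%nat => 0
  | S m' => indc (idempotent j) - rsum (map (fun k => indc (sb k j) * dd m' k) (Jl n))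
  end.

Definition rank {n} (j : form n) : nat := length (filter (fun k => bdec (sb k j)) (Jl n)).

Lemma rank_lt {n} (k j : form n) : In k (Jl n) -> sb k j -> (rank k < rank j)%nat.
Proof.
  intros Hk Hs. unfold rank. apply filter_len_lt.
  - intros x _ H. apply (proj1 (bdec_true _)) in H. apply (proj2 (bdec_true _)). eapply sb_trans; eauto.
  - exists k. split; auto. split; [apply (proj2 (bdec_true _)); auto| apply (proj2 (bdec_false _)), sb_irr].
Qed.

Lemma filter_len {A} (l : list A) p : (length (filter p l) <= length l)%nat.
Proof. induction l; simpl; auto. destruct (p a); simpl; lia. Qed.

Lemma dd_stable {n} m : forall (j : form n), (rank j < m)%nat -> forall m', (m <= m')%nat -> dd m' j = dd m j.
Proof.
  induction m; intros j Hj m' Hm; [lia|]. destruct m' as [|m'']; [lia|]. simpl. f_equal. f_equal.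
  apply map_ext_in. intros k Hk. destruct (classic (sb k j)) as [S|S].
  - rewrite (IHm k); auto; [|lia]. pose proof (rank_lt k j Hk S). lia.
  - unfold indc; destruct excluded_middle_informative; [contradiction| ring].
Qed.

Definition delta {n} (j : form n) : R := dd (S (length (Jl n))) j.

Lemma delta_eq {n} (j : form n) :
  delta j = indc (idempotent j) - rsum (map (fun k => indc (sb k j) * delta k) (Jl n)).
Proof.
  unfold delta. rewrite <- (dd_stable (S (length (Jl n))) j) with (m' := S (S (length (Jl n)))).
  - simpl. reflexivity.
  - unfold rank. pose proof (filter_len (Jl n) (fun k => bdec (sb k j))). lia.
  - lia.
Qed.

Definition nu0 {n} (f : form n) : R := rsum (map (fun k => indc (fle k f) * delta k) (Jl n)).

Lemma fle_sb_iff {n} (k j : form n) : ~ equiv k j -> (fle k j <-> sb k j).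
Proof. unfold sb; tauto. Qed.

Lemma split_sum {n} (l : list (form n)) c j : PW l -> In j l ->
  rsum (map (fun k => indc (fle k j) * c k) l) = c j + rsum (map (fun k => indc (sb k j) * c k) l).
Proof.
  induction l as [|a l IH]; simpl; intros P Hj; [tauto|]. inversion P; subst.
  rewrite Forall_forall in H1.
  destruct Hj as [Hj|Hj].
  - subst. rewrite (ind_iff (fle j j) True), (ind_iff (sb j j) False).
    2: { split; [apply sb_irr| tauto]. }
    2: { split; auto; intros _ v _; lra. }
    unfold indc at 1 3. do 2 destruct excluded_middle_informative; try tauto.
    rewrite (rsum_ext l (fun k => indc (fle k j) * c k) (fun k => indc (sb k j) * c k)); [ring|].
    intros k Hk. assert (NE : ~ equiv k j) by (intro E; apply (H1 k Hk); apply equiv_sym; auto).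
    rewrite (ind_iff _ _ (fle_sb_iff k j NE)); auto.
  - rewrite IH; auto. rewrite (ind_iff _ _ (fle_sb_iff a j (H1 j Hj))). ring.
Qed.

Lemma nu0_J {n} (j : form n) : In j (Jl n) -> nu0 j = indc (idempotent j).
Proof.
  intros Hj. unfold nu0. rewrite (split_sum (Jl n) delta j (Jl_pw n) Hj).
  rewrite (delta_eq j). ring.
Qed.

Lemma fle_and {n} (k f g : form n) : fle k (And f g) <-> fle k f /\ fle k g.
Proof.
  unfold fle; simpl; split.
  - intros H; split; intros v Hv; specialize (H v Hv); unfold Rmin in H; dec; lra.
  - intros [H1 H2] v Hv. specialize (H1 v Hv); specialize (H2 v Hv). unfold Rmin; dec; lra.
Qed.

Lemma fle_or {n} (k f g : form n) : join_irreducible k -> (fle k (Or f g) <-> fle k f \/ fle k g).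
Proof.
  intros [_ J]. split.
  - intros H. destruct (J (And k f) (And k g)) as [E|E].
    + intros v Hv. specialize (H v Hv). simpl in *. unfold Rmin, Rmax in *; dec; lra.
    + left. intros v Hv. rewrite (E v Hv). simpl. unfold Rmin; dec; lra.
    + right. intros v Hv. rewrite (E v Hv). simpl. unfold Rmin; dec; lra.
  - intros [H|H] v Hv; specialize (H v Hv); simpl; unfold Rmax; dec; lra.
Qed.

Lemma nu0_chi n : is_chi_plus (@nu0 n).
Proof.
  split; [split|split; [|split]].
  - intros f g E. unfold nu0. apply rsum_ext. intros k _. f_equal. apply ind_iff.
    split; intros H v Hv; [rewrite <- E| rewrite E]; auto.
  - intros f g. unfold nu0. rewrite !rsum_plus. apply rsum_ext. intros k Hk.
    pose proof (Jl_ji k Hk) as JK.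
    rewrite (ind_iff _ _ (fle_or k f g JK)), (ind_iff _ _ (fle_and k f g)).
    unfold indc. repeat destruct excluded_middle_informative; try (exfalso; tauto); ring.
  - unfold nu0. apply rsum_zero. intros k Hk. unfold indc.
    destruct excluded_middle_informative as [H|H]; [|ring]. exfalso.
    destruct (Jl_ji k Hk) as [N _]. apply N. intros v Hv. specialize (H v Hv).
    pose proof (eval_cube v k Hv). simpl in *. lra.
  - intros g Hg Hi. destruct (Jl_cover g Hg) as [j [Hj E]].
    assert (nu0 g = nu0 j) as ->.
    { unfold nu0. apply rsum_ext. intros k _. f_equal. apply ind_iff.
      split; intros H v Hv; [rewrite <- E| rewrite E]; auto. }
    rewrite nu0_J; auto. unfold indc; destruct excluded_middle_informative; auto.
    exfalso; apply n0. eapply idem_equiv; eauto.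
  - intros g Hg Hi. destruct (Jl_cover g Hg) as [j [Hj E]].
    assert (nu0 g = nu0 j) as ->.
    { unfold nu0. apply rsum_ext. intros k _. f_equal. apply ind_iff.
      split; intros H v Hv; [rewrite <- E| rewrite E]; auto. }
    rewrite nu0_J; auto. unfold indc; destruct excluded_middle_informative; auto.
    exfalso; apply Hi. eapply idem_equiv; eauto. apply equiv_sym; auto.
Qed.

Definition mu {n} (f : form n) : nat := length (filter (fun r => bdec (fle r f)) (reps n)).

Lemma mu_lt {n} (a z : form n) : sb a z -> (mu a < mu z)%nat.
Proof.
  intros [Ha Na]. unfold mu. apply filter_len_lt.
  - intros x _ H. apply (proj1 (bdec_true _)) in H. apply (proj2 (bdec_true _)). eapply fle_trans; eauto.
  - destruct (reps_cover z) as [r [Hr E]]. exists r. split; auto. split.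
    + apply (proj2 (bdec_true _)). apply fle_equiv, equiv_sym; auto.
    + apply (proj2 (bdec_false _)). intro H. apply Na. apply fle_antisym; auto.
      eapply fle_trans; [apply fle_equiv; exact E| exact H].
Qed.

Definition half {n} (z : form n) := forall v, unit_cube v -> eval v z <= 1/2.

Lemma Zlem {n} (nu : form n -> R) (C : is_chi_plus nu) :
  forall N (z : form n), (mu z < N)%nat -> half z -> nu z = 0.
Proof.
  destruct C as [[Vi Vm] [VB [V1 V0]]].
  induction N; intros z Hz Hh; [lia|].
  destruct (classic (equiv z Bot)) as [EB|NB].
  { rewrite (Vi _ _ EB); auto. }
  destruct (classic (join_irreducible z)) as [JZ|NJ].
  { apply V0; auto. intro I. apply NB. intros v Hv. specialize (I v Hv). specialize (Hh v Hv).
    simpl in *. unfold nm_mul in I. dec; lra. }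
  assert (exists a b, equiv z (Or a b) /\ ~ equiv z a /\ ~ equiv z b) as [a [b [E [Na Nb]]]].
  { apply NNPP; intro Cn. apply NJ. split; auto. intros a b E.
    destruct (classic (equiv z a)); auto. destruct (classic (equiv z b)); auto.
    exfalso; apply Cn; exists a, b; auto. }
  set (a' := And a z). set (b' := And b z).
  assert (Sa : sb a' z).
  { split. - intros v Hv; simpl; unfold Rmin; dec; lra.
    - intro E2. apply Na. intros v Hv. specialize (E2 v Hv). specialize (E v Hv).
      simpl in *. unfold Rmin, Rmax in *. dec; lra. }
  assert (Sb : sb b' z).
  { split. - intros v Hv; simpl; unfold Rmin; dec; lra.
    - intro E2. apply Nb. intros v Hv. specialize (E2 v Hv). specialize (E v Hv).
      simpl in *. unfold Rmin, Rmax in *. dec; lra. }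
  assert (Sab : sb (And a' b') z).
  { split. - intros v Hv; simpl; unfold Rmin; dec; lra.
    - intro E2. apply Na. intros v Hv. specialize (E2 v Hv). specialize (E v Hv).
      simpl in *. unfold Rmin, Rmax in *. dec; lra. }
  assert (Hz' : equiv z (Or a' b')).
  { intros v Hv. specialize (E v Hv). simpl in *. unfold Rmin, Rmax in *. dec; lra. }
  pose proof (mu_lt _ _ Sa); pose proof (mu_lt _ _ Sb); pose proof (mu_lt _ _ Sab).
  assert (half a') by (intros v Hv; specialize (Hh v Hv); simpl; unfold Rmin; dec; lra).
  assert (half b') by (intros v Hv; specialize (Hh v Hv); simpl; unfold Rmin; dec; lra).
  assert (half (And a' b')) by (intros v Hv; specialize (Hh v Hv); simpl; unfold Rmin; dec; lra).
  rewrite (Vi _ _ Hz'). pose proof (Vm a' b').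
  rewrite (IHN a'), (IHN b'), (IHN (And a' b')) in H5 by (auto; lia). lra.
Qed.

Lemma main2 {n} (nu : form n -> R) (C : is_chi_plus nu) (x : form n) : nu (Mul x x) = nu x.
Proof.
  pose proof C as [[Vi Vm] _].
  set (f := Mul x x). set (g := And x (Imp x Bot)).
  pose proof (Vm f g) as M.
  assert (E : equiv (Or f g) x).
  { intros v Hv. pose proof (eval_cube v x Hv). simpl. unfold nm_mul, nm_imp, Rmin, Rmax. dec; lra. }
  rewrite (Vi _ _ E) in M.
  assert (half g) by (intros v Hv; pose proof (eval_cube v x Hv); simpl; unfold nm_imp, Rmin, Rmax; dec; lra).
  assert (half (And f g)) by (intros v Hv; pose proof (eval_cube v x Hv); simpl; unfold nm_mul, nm_imp, Rmin, Rmax; dec; lra).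
  rewrite (Zlem nu C (S (mu g)) g), (Zlem nu C (S (mu (And f g))) (And f g)) in M; auto; lra.
Qed.

Theorem proposition2 (n : nat) (Hn : (1 <= n)%nat) :
  (exists nu : form n -> R, is_chi_plus nu) /\
  (forall nu : form n -> R, is_chi_plus nu ->
     forall x : form n, nu (Mul x x) = nu x).
Proof.
  split; [exists (@nu0 n); apply nu0_chi|]. intros nu C x. apply main2; auto.
Qed.
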